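(* Let $d>1$ be an integer and $\mu>0$. Let $A,B$ be sequences of non-negative integers bounded by $\mu$ with $\mathrm{DS}(A,d)<\mathrm{DS}(B,d)$. Then there exist integer sequences $C$ and $X$ such that $A[0]+C[0]+X[0]=B[0]$ and $A[i]+C[i]+X[i]=B[i]+d\cdot X[i-1]$ for all $i\ge1$, and moreover $0\le C[0]\le \mu\cdot\frac{d}{d-1}$, $0\le C[i]<d$ for all $i\ge1$, and $|X[i]|\le 1+\frac{\mu}{d-1}$ for all $i\ge0$.
   Context: $\mathrm{DS}(A,d)=\sum_{i\ge0}A[i]/d^i$. *)

(* Defs.v *)
From Stdlib Require Import Reals Lra Lia ZArith ClassicalEpsilon.
Open Scope R_scope.

Definition DS_term (A : nat -> nat) (d : nat) (i : nat) : R :=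
  INR (A i) / INR d ^ i.

(* DS(A,d) = sum_{i>=0} A[i]/d^i, defined as the (chosen) limit of the series.
   When the series converges (e.g. A bounded and d > 1) this is its sum,
   by uniqueness of limits. *)
Definition DS (A : nat -> nat) (d : nat) : R :=
  epsilon (inhabits 0) (fun l => infinite_sum (DS_term A d) l).

(* Main.v *)
Require Import Defs.
From Stdlib Require Import Reals ZArith.
From Stdlib Require Import Lra Lia ClassicalEpsilon.
Open Scope R_scope.

Lemma cv_const (c : R) : Un_cv (fun _ => c) c.
Proof. intros e He; exists 0%nat; intros; unfold R_dist; rewrite Rminus_diag, Rabs_R0; lra. Qed.

Lemma DS_spec (A : nat -> nat) (d : nat) (mu : R) :
  (1 < d)%nat -> (forall i, INR (A i) <= mu) ->
  infinite_sum (DS_term A d) (DS A d).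
Proof.
  intros Hd HA. unfold DS. apply epsilon_spec.
  assert (HdR : 1 < INR d) by (apply lt_1_INR; lia).
  assert (Hx : Rabs (/ INR d) < 1).
  { rewrite Rabs_right. rewrite <- Rinv_1. apply Rinv_lt_contravar; lra.
    left; apply Rinv_0_lt_compat; lra. }
  destruct (Rseries_CV_comp (DS_term A d) (fun n => 1 * (/ INR d) ^ n * mu)) as [l Hl].
  - intro n. unfold DS_term. split.
    + apply Rmult_le_pos. apply pos_INR. left; apply Rinv_0_lt_compat, pow_lt; lra.
    + rewrite Rmult_1_l, pow_inv. unfold Rdiv. rewrite Rmult_comm.
      apply Rmult_le_compat_l. left; apply Rinv_0_lt_compat, pow_lt; lra. apply HA.
  - exists (/ (1 - / INR d) * mu).
    pose proof (GP_infinite _ Hx) as G. unfold Pser, infinite_sum in G.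
    pose proof (CV_mult _ _ _ _ (cv_const mu) G) as G2.
    intros e He. destruct (G2 e He) as [N HN]. exists N. intros n Hn.
    rewrite <- scal_sum. rewrite (Rmult_comm (/ _)). apply HN; auto.
  - exists l. exact Hl.
Qed.

Lemma lim_bound (u : nat -> R) (l c M : R) (N : nat) :
  Un_cv u l -> (forall n, (N <= n)%nat -> Rabs (u n - c) <= M) -> Rabs (l - c) <= M.
Proof.
  intros Hu Hb. destruct (Rle_dec (Rabs (l - c)) M) as [h|h]; auto. exfalso.
  destruct (Hu (Rabs (l - c) - M)) as [n0 Hn0]; [lra|].
  specialize (Hn0 (max n0 N) ltac:(lia)). specialize (Hb (max n0 N) ltac:(lia)).
  unfold R_dist in Hn0.
  pose proof (Rabs_triang (u (max n0 N) - c) (l - u (max n0 N))) as T.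
  replace (u (max n0 N) - c + (l - u (max n0 N))) with (l - c) in T by ring.
  rewrite Rabs_minus_sym in Hn0. lra.
Qed.

Lemma Rabs_le_inv x M : Rabs x <= M -> -M <= x <= M.
Proof. unfold Rabs; destruct Rcase_abs; intros; lra. Qed.

Definition fl (x : R) : Z := (up x - 1)%Z.

Lemma fl_spec x : IZR (fl x) <= x < IZR (fl x) + 1.
Proof. unfold fl. rewrite minus_IZR. destruct (archimed x). lra. Qed.

Theorem corollary10 (d : nat) (mu : R) (A B : nat -> nat) :
  (1 < d)%nat -> 0 < mu ->
  (forall i, INR (A i) <= mu) -> (forall i, INR (B i) <= mu) ->
  DS A d < DS B d ->
  exists (C X : nat -> Z),
    (Z.of_nat (A 0%nat) + C 0%nat + X 0%nat = Z.of_nat (B 0%nat))%Z /\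
    (forall i, (1 <= i)%nat ->
       (Z.of_nat (A i) + C i + X i = Z.of_nat (B i) + Z.of_nat d * X (i - 1)%nat)%Z) /\
    (0 <= IZR (C 0%nat) <= mu * (INR d / (INR d - 1))) /\
    (forall i, (1 <= i)%nat -> (0 <= C i)%Z /\ (C i < Z.of_nat d)%Z) /\
    (forall i, Rabs (IZR (X i)) <= 1 + mu / (INR d - 1)).
Proof.
  intros Hd Hmu HA HB HDS.
  assert (HdR : 1 < INR d) by (apply lt_1_INR; lia).
  set (dR := INR d) in *.
  set (D := DS B d - DS A d).
  set (a := fun j => (INR (B j) - INR (A j)) / dR ^ j).
  set (S := fun n => sum_f_R0 a n).
  assert (HS : Un_cv S D).
  { pose proof (CV_minus _ _ _ _ (DS_spec B d mu Hd HB) (DS_spec A d mu Hd HA)) as H.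
    intros e He. destruct (H e He) as [N HN]. exists N. intros n Hn.
    unfold S. replace (sum_f_R0 a n) with
      (sum_f_R0 (DS_term B d) n - sum_f_R0 (DS_term A d) n). apply HN; auto.
    rewrite <- minus_sum. apply sum_eq. intros. unfold a, DS_term, dR. field.
    apply pow_nonzero. fold dR; lra. }
  assert (Hpow : forall n, 0 < dR ^ n) by (intro; apply pow_lt; lra).
  assert (Ha : forall j, Rabs (a j) <= mu / dR ^ j).
  { intro j. unfold a, Rdiv. rewrite Rabs_mult, Rabs_inv. rewrite (Rabs_right (dR ^ j)) by (left; apply Hpow).
    apply Rmult_le_compat_r. left; apply Rinv_0_lt_compat; auto.
    pose proof (pos_INR (A j)); pose proof (pos_INR (B j)); pose proof (HA j); pose proof (HB j).
    unfold Rabs; destruct Rcase_abs; lra. }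
  assert (Htail : forall i m, (i <= m)%nat ->
            Rabs (S m - S i) <= mu / (dR - 1) * (/ dR ^ i - / dR ^ m)).
  { intros i m Him. induction Him.
    - rewrite Rminus_diag, Rabs_R0, Rminus_diag, Rmult_0_r. lra.
    - unfold S in *. simpl sum_f_R0.
      replace (sum_f_R0 a m + a (Datatypes.S m) - sum_f_R0 a i)
        with ((sum_f_R0 a m - sum_f_R0 a i) + a (Datatypes.S m)) by ring.
      eapply Rle_trans. apply Rabs_triang.
      replace (mu / (dR - 1) * (/ dR ^ i - / dR ^ Datatypes.S m)) with
        (mu / (dR - 1) * (/ dR ^ i - / dR ^ m) + mu / dR ^ Datatypes.S m).
      apply Rplus_le_compat; auto.
      simpl. field. pose proof (Hpow m). pose proof (Hpow i). repeat split; lra. }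
  assert (HT : forall i, Rabs (D - S i) <= mu / (dR - 1) * / dR ^ i).
  { intro i. apply (lim_bound S D (S i) _ i HS). intros n Hn.
    eapply Rle_trans. apply Htail; auto. apply Rmult_le_compat_l.
    apply Rmult_le_pos. lra. left; apply Rinv_0_lt_compat; lra.
    pose proof (Rinv_0_lt_compat _ (Hpow n)). lra. }
  assert (HD0 : 0 < D) by (unfold D; lra).
  set (P := fix P (i : nat) : Z := match i with
             | O => (Z.of_nat (B 0%nat) - Z.of_nat (A 0%nat))%Z
             | Datatypes.S k => (Z.of_nat d * P k + Z.of_nat (B (Datatypes.S k)) - Z.of_nat (A (Datatypes.S k)))%Z end).
  assert (HP : forall i, IZR (P i) = dR ^ i * S i).
  { induction i.
    - simpl. unfold S, a. simpl. rewrite minus_IZR, <- !INR_IZR_INZ. field.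
    - change (P (Datatypes.S i)) with
        (Z.of_nat d * P i + Z.of_nat (B (Datatypes.S i)) - Z.of_nat (A (Datatypes.S i)))%Z.
      rewrite minus_IZR, plus_IZR, mult_IZR, IHi, <- !INR_IZR_INZ.
      unfold S. simpl sum_f_R0. assert (ha : a (Datatypes.S i) = (INR (B (Datatypes.S i)) - INR (A (Datatypes.S i))) / (dR * dR ^ i)) by reflexivity. rewrite ha. fold a. simpl pow. unfold dR in *. field.
      pose proof (Hpow i). split; lra. }
  set (F := fun i => fl (dR ^ i * D)).
  exists (fun i => match i with O => F O | Datatypes.S k => (F (Datatypes.S k) - Z.of_nat d * F k)%Z end).
  exists (fun i => (P i - F i)%Z).
  split; [|split; [|split; [|split]]].
  - simpl. lia.
  - intros i Hi. destruct i as [|k]; [lia|]. replace (Datatypes.S k - 1)%nat with k by lia.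
    change (P (Datatypes.S k)) with
        (Z.of_nat d * P k + Z.of_nat (B (Datatypes.S k)) - Z.of_nat (A (Datatypes.S k)))%Z.
    ring.
  - unfold F. simpl pow. rewrite Rmult_1_l. pose proof (fl_spec D) as [h1 h2].
    split.
    + assert (-1 < IZR (fl D)) by lra. apply lt_IZR in H. apply IZR_le. lia.
    + eapply Rle_trans; [exact h1|].
      pose proof (HT 0%nat) as T0. simpl in T0. unfold S, a in T0. simpl in T0.
      replace ((INR (B 0%nat) - INR (A 0%nat)) / 1) with (INR (B 0%nat) - INR (A 0%nat)) in T0 by field.
      pose proof (HB 0%nat); pose proof (pos_INR (A 0%nat)).
      apply Rabs_le_inv in T0 as [T1 T2]. 
      replace (mu * (dR / (dR - 1))) with (mu + mu / (dR - 1) * / 1) by (field; lra).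
      lra.
  - intros i Hi. destruct i as [|k]; [lia|]. unfold F.
    pose proof (fl_spec (dR ^ k * D)) as [h1 h2].
    pose proof (fl_spec (dR ^ Datatypes.S k * D)) as [h3 h4].
    replace (dR ^ Datatypes.S k * D) with (dR * (dR ^ k * D)) in * by (simpl; ring).
    set (y := dR ^ k * D) in *.
    assert (IZR (Z.of_nat d * fl y) < IZR (fl (dR * y) + 1)).
    { rewrite plus_IZR, mult_IZR, <- INR_IZR_INZ. fold dR. nra. }
    assert (IZR (fl (dR * y)) < IZR (Z.of_nat d * fl y + Z.of_nat d)).
    { rewrite plus_IZR, mult_IZR, <- INR_IZR_INZ. fold dR. nra. }
    apply lt_IZR in H0. apply lt_IZR in H. lia.
  - intro i. rewrite minus_IZR, HP. unfold F.
    pose proof (fl_spec (dR ^ i * D)) as [h1 h2].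
    pose proof (HT i) as T.
    assert (Hb : Rabs (dR ^ i * (D - S i)) <= mu / (dR - 1)).
    { rewrite Rabs_mult, (Rabs_right (dR ^ i)) by (left; apply Hpow).
      replace (mu / (dR - 1)) with (dR ^ i * (mu / (dR - 1) * / dR ^ i))
        by (field; pose proof (Hpow i); split; lra).
      apply Rmult_le_compat_l; [left; auto| exact T]. }
    apply Rabs_le_inv in Hb as [b1 b2].
    apply Rabs_le. lra.
Qed.
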